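(* Let $n\ge1$ and for $a_0,\dots,a_n\in[0,1]$ and $p\in[0,1]$ put $$D(a_0,\dots,a_n;p)=\sum_{k=0}^n\binom{n}{k}p^k(1-p)^{n-k}|p-a_k|.$$ Suppose $(a_0,\dots,a_n)\in[0,1]^{n+1}$ minimizes $\max_{p\in[0,1]}D(x_0,\dots,x_n;p)$ over all $(x_0,\dots,x_n)\in[0,1]^{n+1}$, and let $f(p)=D(a_0,\dots,a_n;p)$ and $M(f)=\{x\in[0,1]: f(x)=\max_{[0,1]}f\}$. Then $a_0<a_1<\cdots<a_n$, and $M(f)\cap(a_i,a_{i+1})\neq\emptyset$ for every $i=0,\dots,n-1$. *)

(* Defs.v *)
From HB Require Import structures.
From mathcomp Require Import all_boot all_order all_algebra.
From mathcomp Require Import all_classical all_reals.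
Set Implicit Arguments. Unset Strict Implicit. Unset Printing Implicit Defensive.
Import Order.TTheory GRing.Theory Num.Theory.
Local Open Scope ring_scope.
Local Open Scope classical_set_scope.

Definition Dfun (R : realType) (n : nat) (a : nat -> R) (p : R) : R :=
  \sum_(k < n.+1) ('C(n, k))%:R * p ^+ k * (1 - p) ^+ (n - k) * `|p - a k|.

(* max over p in [0,1] of D(a; p) (the sup is attained by continuity) *)
Definition Dmax (R : realType) (n : nat) (a : nat -> R) : R :=
  sup [set Dfun n a p | p in [set p : R | 0 <= p <= 1]].

Definition in_cube (R : realType) (n : nat) (a : nat -> R) : Prop :=
  forall k, (k <= n)%N -> 0 <= a k <= 1.

(* Main.v *)
Require Import Defs.
From HB Require Import structures.
From mathcomp Require Import all_boot all_order all_algebra.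
From mathcomp Require Import all_classical all_reals all_analysis.
From mathcomp Require Import ring lra.
Import Order.TTheory GRing.Theory Num.Theory.
Import numFieldNormedType.Exports.
Local Open Scope ring_scope.
Local Open Scope classical_set_scope.

Section S.
Variable R : realType.
Variable n : nat.

Definition Bk (k : nat) (p : R) : R := ('C(n, k))%:R * p ^+ k * (1 - p) ^+ (n - k).

Lemma Dfun_B (x : nat -> R) p : Dfun n x p = \sum_(k < n.+1) Bk k p * `|p - x k|.
Proof. by []. Qed.

Lemma Bk_ge0 k p : 0 <= p <= 1 -> 0 <= Bk k p.
Proof.
case/andP=> p0 p1; rewrite /Bk; apply: mulr_ge0; [apply: mulr_ge0|].
- exact: ler0n.
- exact: exprn_ge0.
- by apply: exprn_ge0; rewrite subr_ge0.
Qed.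

Lemma Bk_gt0 k p : (k <= n)%N -> 0 < p < 1 -> 0 < Bk k p.
Proof.
move=> kn /andP[p0 p1]; rewrite /Bk; apply: mulr_gt0; [apply: mulr_gt0|].
- by rewrite ltr0n bin_gt0.
- exact: exprn_gt0.
- by apply: exprn_gt0; rewrite subr_gt0.
Qed.

Lemma Bsum p : \sum_(k < n.+1) Bk k p = 1.
Proof.
have := exprDn (1 - p) p n; rewrite subrK expr1n => ->.
apply: eq_bigr => k _; rewrite /Bk -mulr_natl; ring.
Qed.

Lemma sum_ge_term (F : 'I_n.+1 -> R) k : (forall j, 0 <= F j) -> F k <= \sum_j F j.
Proof.
move=> F0; rewrite (bigD1 k) //= lerDl; apply: sumr_ge0 => j _; exact: F0.
Qed.

Lemma sum_if (F : nat -> R) i : (i < n.+1)%N ->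
  \sum_(k < n.+1) (if (k : nat) == i then F k else 0) = F i.
Proof.
move=> hi; rewrite (bigD1 (Ordinal hi)) //= eqxx big1 ?addr0 // => j hj.
case: eqP => // ji; case/eqP: hj; exact: val_inj.
Qed.

Lemma Dfun_ge0 (x : nat -> R) p : 0 <= p <= 1 -> 0 <= Dfun n x p.
Proof. move=> hp; apply: sumr_ge0 => k _; apply: mulr_ge0 => //; exact: Bk_ge0. Qed.

Lemma Dfun_le1 (x : nat -> R) p : in_cube n x -> 0 <= p <= 1 -> Dfun n x p <= 1.
Proof.
move=> hx hp; rewrite Dfun_B -(Bsum p); apply: ler_sum => k _.
rewrite -[X in _ <= X]mulr1; apply: ler_wpM2l; first exact: Bk_ge0.
have /andP[x0 x1] := hx k (ltn_ord k); case/andP: hp => p0 p1.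
rewrite ler_norml; apply/andP; split; lra.
Qed.

Lemma Dfun_at0 (x : nat -> R) : Dfun n x 0 = `|x 0%N|.
Proof.
rewrite Dfun_B big_ord_recl big1 ?addr0.
  by rewrite /Bk bin0 expr0 subr0 expr1n !mul1r sub0r normrN.
by move=> j _; rewrite /Bk expr0n /= mulr0 !mul0r.
Qed.

Lemma Dfun_at1 (x : nat -> R) : Dfun n x 1 = `|1 - x n|.
Proof.
rewrite Dfun_B big_ord_recr /= big1 ?add0r.
  by rewrite /Bk binn subnn expr0 expr1n !mulr1 mul1r.
move=> j _; rewrite /Bk subrr expr0n.
have : (n - j)%N != 0%N by rewrite subn_eq0 -ltnNge.
by move/negbTE => ->; rewrite mulr0 mul0r.
Qed.

Lemma term_le_D (x : nat -> R) p k : (k <= n)%N -> 0 <= p <= 1 -> Bk k p * `|p - x k| <= Dfun n x p.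
Proof.
move=> kn hp; rewrite Dfun_B.
have := @sum_ge_term (fun j : 'I_n.+1 => Bk j p * `|p - x j|) (Ordinal (kn : (k < n.+1)%N)).
apply => j; apply: mulr_ge0 => //; exact: Bk_ge0.
Qed.


Lemma Dfun_cont (x : nat -> R) : continuous (Dfun n x).
Proof.
move=> p; rewrite /Dfun.
apply: cvg_big; first exact: add_continuous.
move=> k _.
apply: cvgM; last first.
  apply: cvg_norm.
  by apply: cvgB; [exact: cvg_id| exact: cvg_cst].
apply: cvgM; last first.
  apply: (@cvg_comp _ _ _ (fun q => 1 - q) (fun q => q ^+ (n - k))); last exact: exprn_continuous.
  by apply: cvgB; [exact: cvg_cst| exact: cvg_id].
apply: cvgM; first exact: cvg_cst.
exact: exprn_continuous.
Qed.

Lemma Dmax_spec {x : nat -> R} : in_cube n x ->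
  (forall p, 0 <= p <= 1 -> Dfun n x p <= Dmax n x) /\
  exists2 p, 0 <= p <= 1 & Dfun n x p = Dmax n x.
Proof.
move=> hx.
set S := [set Dfun n x p | p in [set p : R | 0 <= p <= 1]].
have hS : has_sup S.
  split; first by exists (Dfun n x 0), 0 => //=; rewrite lexx ler01.
  by exists 1 => y [p hp <-]; exact: Dfun_le1.
have ub : forall p, 0 <= p <= 1 -> Dfun n x p <= Dmax n x.
  by move=> p hp; apply: (sup_upper_bound hS); exists p.
split => //.
have [c hc hmax] := @EVT_max R (Dfun n x) 0 1 ler01 (continuous_subspaceT (Dfun_cont x)).
move: hc; rewrite in_itv /= => hc.
exists c => //; apply: le_anti; rewrite ub //=.
apply: ge_sup; first by case: hS.
move=> y [p hp <-]; apply: hmax; by rewrite in_itv.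
Qed.

Lemma Dconv (a h : nat -> R) p s t : 0 <= p <= 1 -> 0 <= s -> s <= t -> 0 < t ->
  Dfun n (fun k => a k + s * h k) p <=
  (1 - s / t) * Dfun n a p + (s / t) * Dfun n (fun k => a k + t * h k) p.
Proof.
move=> hp s0 st t0; rewrite !Dfun_B !mulr_sumr -big_split /=; apply: ler_sum => k _.
rewrite mulrCA [(s / t) * _]mulrCA -mulrDr; apply: ler_wpM2l; first exact: Bk_ge0.
have l0 : 0 <= s / t by apply: divr_ge0 => //; exact: ltW.
have l1 : s / t <= 1 by rewrite ler_pdivrMr // mul1r.
have -> : p - (a k + s * h k) = (1 - s / t) * (p - a k) + (s / t) * (p - (a k + t * h k)).
  by field; rewrite gt_eqF.
have l2 : 0 <= 1 - s / t by rewrite subr_ge0.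
by apply: (le_trans (ler_normD _ _)); rewrite (normrM (1 - s / t)) (normrM (s / t)) (ger0_norm l0) (ger0_norm l2).
Qed.

Lemma Dlip (x y : nat -> R) p H : 0 <= p <= 1 -> (forall k, (k <= n)%N -> `|x k - y k| <= H) ->
  Dfun n x p <= Dfun n y p + H.
Proof.
move=> hp hH; rewrite !Dfun_B -[X in _ + X]mul1r -(Bsum p) mulr_suml -big_split /=.
apply: ler_sum => k _; rewrite -mulrDr; apply: ler_wpM2l; first exact: Bk_ge0.
have := hH k (ltn_ord k).
have := ler_normD (p - y k) (y k - x k).
rewrite (_ : p - y k + (y k - x k) = p - x k); last by ring.
move=> h1 h2; rewrite (distrC (y k)) in h1; lra.
Qed.

Lemma abs_step (d t h : R) : d != 0 -> 0 <= t -> t * `|h| <= `|d| ->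
  `|d - t * h| = `|d| - t * (Num.sg d * h).
Proof.
move=> d0 t0 th.
have : `|t * h| <= `|d| by rewrite normrM ger0_norm.
rewrite ler_norml => /andP[h1 h2].
case: (ltrgtP d 0) => hd; last by rewrite hd eqxx in d0.
- rewrite ltr0_sg // ltr0_norm // in h1 h2 *.
  rewrite ler0_norm; first by ring.
  lra.
- rewrite gtr0_sg // gtr0_norm // in h1 h2 *.
  rewrite ger0_norm; first by ring.
  lra.
Qed.

Lemma eventually_small {c e : R} : 0 <= c -> 0 < e ->
  exists J, forall j, (J <= j)%N -> c / (j.+1)%:R < e.
Proof.
move=> c0 e0; exists (Num.Def.archi_bound (c / e)) => j hj.
have h1 := archi_boundP (divr_ge0 c0 (ltW e0)).
have h2 : (Num.Def.archi_bound (c / e))%:R <= (j.+1)%:R :> R.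
  by rewrite ler_nat (leq_trans hj).
rewrite ltr_pdivrMr ?ltr0Sn //.
rewrite -ltr_pdivrMl //.
by rewrite mulrC; exact: lt_le_trans h1 h2.
Qed.

Lemma GL (a h : nat -> R) (tau Hh : R) :
  0 < tau -> (forall k, (k <= n)%N -> `|h k| <= Hh) ->
  (forall t, 0 <= t <= tau -> in_cube n (fun k => a k + t * h k)) ->
  in_cube n a ->
  (forall x, in_cube n x -> Dmax n a <= Dmax n x) ->
  (forall p, 0 <= p <= 1 -> Dfun n a p = Dmax n a ->
     exists2 t0, 0 < t0 <= tau & Dfun n (fun k => a k + t0 * h k) p < Dmax n a) ->
  False.
Proof.
move=> tau0 hH hcube ha hmin hyp.
set m := Dmax n a.
have Hh0 : 0 <= Hh by apply: le_trans (hH 0%N (leq0n n)).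
pose s j := tau / (j.+1)%:R.
have s_pos j : 0 < s j by rewrite /s divr_gt0 // ltr0Sn.
have s_le j : s j <= tau.
  rewrite /s ler_pdivrMr ?ltr0Sn // ler_peMr ?(ltW tau0) //; by rewrite ler1n.
have ex : forall j, exists p, (0 <= p <= 1) /\ m <= Dfun n (fun k => a k + s j * h k) p.
  move=> j; have hc : in_cube n (fun k => a k + s j * h k) by apply: hcube; rewrite (ltW (s_pos j)) s_le.
  have [_ [p hp hpe]] := Dmax_spec hc.
  by exists p; split => //; rewrite hpe; exact: hmin.
have [pj hpj] := choice ex.
set F := pj @ \oo.
have tail J : F (pj @` [set j | (J <= j)%N]).
  by apply: filterS (nbhs_infty_ge J) => j hj; exists j.
have F01 : F `[0, 1].
  by apply: filterS (nbhs_infty_ge 0) => j _ /=; rewrite in_itv /=; case: (hpj j).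
have [ps [hps hcl]] := @segment_compact R 0 1 F _ F01.
move: hps; rewrite /= in_itv /= => hps.
have [ub _] := Dmax_spec ha.
have fps : Dfun n a ps = m.
  apply: le_anti; rewrite ub //=; rewrite leNgt; apply/negP => hlt.
  set eta := m - Dfun n a ps.
  have eta0 : 0 < eta by rewrite subr_gt0.
  have nB : \forall q \near ps, Dfun n a q < Dfun n a ps + eta / 2.
    by apply: (cvgr_lt _ (Dfun_cont a ps)); rewrite ltrDl divr_gt0.
  have [J hJ] := eventually_small (mulr_ge0 (ltW tau0) Hh0) (divr_gt0 eta0 (ltr0Sn _ 1)).
  have [q [[j hj <-] hq]] := hcl _ _ (tail J) nB.
  have [hpj1 hpj2] := hpj j.
  have := Dlip (fun k => a k + s j * h k) a (pj j) (s j * Hh) hpj1.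
  have hsj : s j * Hh < eta / 2 by rewrite /s mulrAC; exact: hJ.
  have : forall k, (k <= n)%N -> `|a k + s j * h k - a k| <= s j * Hh.
    move=> k hk; rewrite addrC addKr normrM gtr0_norm //; apply: ler_wpM2l; [exact: ltW | exact: hH].
  move=> hk /(_ hk) hle.
  move: hq; rewrite /= => hq.
  have : m < m by rewrite /eta in hsj hq; lra.
  by rewrite ltxx.
have [t0 /andP[t00 t0tau] ht0] := hyp ps hps fps.
have nB : \forall q \near ps, Dfun n (fun k => a k + t0 * h k) q < m.
  by apply: (cvgr_lt _ (Dfun_cont _ ps)); rewrite ht0.
have [J hJ] := eventually_small (ltW tau0) t00.
have [q [[j hj <-] hq]] := hcl _ _ (tail J) nB.
have [hpj1 hpj2] := hpj j.
move: hq; rewrite /= => hq.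
have sjt : s j <= t0 by apply: ltW; exact: hJ.
have hc := Dconv a h (pj j) (s j) t0 hpj1 (ltW (s_pos j)) sjt t00.
have l0 : 0 < s j / t0 by rewrite divr_gt0.
have l1 : s j / t0 <= 1 by rewrite ler_pdivrMr // mul1r.
have hf : Dfun n a (pj j) <= m by apply: ub.
have e1 : (1 - s j / t0) * Dfun n a (pj j) <= (1 - s j / t0) * m.
  by apply: ler_wpM2l => //; rewrite subr_ge0.
have e2 : (s j / t0) * Dfun n (fun k => a k + t0 * h k) (pj j) < (s j / t0) * m.
  by rewrite ltr_pM2l.
have : m < m by lra.
by rewrite ltxx.
Qed.

Lemma near_pos {P : {poly R}} {c : R} : 0 < P.[c] ->
  exists2 e, 0 < e & forall q, `|c - q| < e -> 0 < P.[q].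
Proof.
move=> Pc.
have : \forall q \near c, 0 < P.[q].
  exact: (cvgr_gt _ (@continuous_horner _ P c)).  
move/nbhs_ballP => [e /= e0 hb].
exists e => // q hq; apply: hb; rewrite -ball_normE /ball_ /=; done.
Qed.

Lemma kink (a : nat -> R) k : (k <= n)%N -> 0 < a k < 1 ->
  exists2 q, 0 <= q <= 1 & Dfun n a (a k) < Dfun n a q.
Proof.
move=> kn /andP[c0 c1].
set c := a k in c0 c1 *.
pose sig j := if a j == c then 0 else Num.sg (c - a j).
pose G : {poly R} := \sum_(j < n.+1) (('C(n,j))%:R * sig j) *: ('X^j * (1 - 'X)^+(n-j) * ('X - (a j)%:P)).
pose K : {poly R} := \sum_(j < n.+1) (if a j == c then ('C(n,j))%:R else 0) *: ('X^j * (1 - 'X)^+(n-j)).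
have Gq q : G.[q] = \sum_(j < n.+1) ('C(n,j))%:R * sig j * (q^+j * (1-q)^+(n-j) * (q - a j)).
  by rewrite /G horner_sum; apply: eq_bigr => j _; rewrite hornerZ !hornerE.
have Kq q : K.[q] = \sum_(j < n.+1) (if a j == c then ('C(n,j))%:R else 0) * (q^+j * (1-q)^+(n-j)).
  by rewrite /K horner_sum; apply: eq_bigr => j _; rewrite hornerZ !hornerE.
have low q : 0 <= q <= 1 -> G.[q] + K.[q] * `|q - c| <= Dfun n a q.
  move=> hq; rewrite Gq Kq mulr_suml -big_split /= Dfun_B; apply: ler_sum => j _.
  rewrite /sig; case: eqP => hj.
    by rewrite hj mulr0 mul0r add0r /Bk !mulrA lexx.
  rewrite !mul0r addr0.
  have -> : ('C(n, j))%:R * Num.sg (c - a j) * (q ^+ j * (1 - q) ^+ (n - j) * (q - a j))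
     = Bk j q * (Num.sg (c - a j) * (q - a j)) by rewrite /Bk; ring.
  apply: ler_wpM2l; first exact: Bk_ge0.
  apply: (le_trans (ler_norm _)); rewrite normrM normr_sg.
  case: (_ != 0); by rewrite ?mul1r ?mul0r.
have eqc : Dfun n a c = G.[c].
  rewrite Gq Dfun_B; apply: eq_bigr => j _; rewrite /sig /Bk; case: eqP => hj.
    by rewrite hj subrr normr0 !mulr0.
  rewrite [`|c - a j|]normrEsg; ring.
have Kc : 0 < K.[c].
  rewrite Kq.
  have hterm : 0 < ('C(n,k))%:R * (c^+k * (1-c)^+(n-k)).
    have := @Bk_gt0 k c kn; rewrite /Bk -mulrA; apply; by rewrite c0 c1.
  have hsum := @sum_ge_term (fun j : 'I_n.+1 => (if a j == c then ('C(n,j))%:R else 0) * (c^+j * (1-c)^+(n-j))) (Ordinal (kn : (k < n.+1)%N)).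
  rewrite /= eqxx in hsum; apply: (lt_le_trans hterm); apply: hsum.
  move=> j; apply: mulr_ge0; first by case: (_ == _).
  by apply: mulr_ge0; apply: exprn_ge0; rewrite ?subr_ge0 ltW.
have rt : root (G - G.[c]%:P) c by rewrite rootE hornerD hornerN hornerC subrr.
have [Ga hGa] := factor_theorem _ _ rt.
have GGa q : G.[q] = G.[c] + Ga.[q] * (q - c).
  have := congr1 (fun P => P.[q]) hGa; rewrite /= hornerD hornerN hornerC hornerM hornerXsubC.
  move=> <-; ring.
case: (lerP 0 Ga.[c]) => hGc.
  have P1c : 0 < (Ga + K).[c] by rewrite hornerD; lra.
  have [e e0 he] := near_pos P1c.
  set q := c + Num.min (e / 2) (1 - c).
  have m0 : 0 < Num.min (e / 2) (1 - c) by rewrite lt_min divr_gt0 // subr_gt0.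
  have m1 : Num.min (e / 2) (1 - c) <= 1 - c by rewrite ge_min lexx orbT.
  have m2 : Num.min (e / 2) (1 - c) <= e / 2 by rewrite ge_min lexx.
  have hq01 : 0 <= q <= 1 by rewrite /q; apply/andP; split; lra.
  have hqe : `|c - q| < e.
    have -> : c - q = - Num.min (e / 2) (1 - c) by rewrite /q; ring.
    rewrite normrN gtr0_norm //; lra.
  have Pq := he q hqe; rewrite hornerD in Pq.
  exists q => //; apply: (lt_le_trans _ (low q hq01)).
  have qc : q - c = Num.min (e / 2) (1 - c) by rewrite /q; ring.
  rewrite eqc (GGa q) qc gtr0_norm //.
  have : 0 < (Ga.[q] + K.[q]) * Num.min (e / 2) (1 - c) by apply: mulr_gt0.
  lra.
have P2c : 0 < (K - Ga).[c] by rewrite hornerD hornerN; lra.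
have [e e0 he] := near_pos P2c.
set q := c - Num.min (e / 2) c.
have m0 : 0 < Num.min (e / 2) c by rewrite lt_min divr_gt0.
have m1 : Num.min (e / 2) c <= c by rewrite ge_min lexx orbT.
have m2 : Num.min (e / 2) c <= e / 2 by rewrite ge_min lexx.
have hq01 : 0 <= q <= 1 by rewrite /q; apply/andP; split; lra.
have hqe : `|c - q| < e.
  have -> : c - q = Num.min (e / 2) c by rewrite /q; ring.
  rewrite gtr0_norm //; lra.
have Pq := he q hqe; rewrite hornerD hornerN in Pq.
exists q => //; apply: (lt_le_trans _ (low q hq01)).
have qc : q - c = - Num.min (e / 2) c by rewrite /q; ring.
rewrite eqc (GGa q) qc ltr0_norm ?oppr_lt0 // opprK.
have : 0 < (K.[q] - Ga.[q]) * Num.min (e / 2) c by apply: mulr_gt0.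
lra.
Qed.

Lemma near_lt {f : R -> R} {c m : R} : continuous f -> f c < m ->
  exists2 e, 0 < e & forall q, `|c - q| < e -> f q < m.
Proof.
move=> fc hc.
have : \forall q \near c, f q < m by exact: (cvgr_lt _ (fc c)).
move/nbhs_ballP => [e /= e0 hb]; exists e => // q hq.
Qed.

Lemma mpos (a : nat -> R) : in_cube n a -> 0 < Dmax n a.
Proof.
move=> ha; have [ub _] := Dmax_spec ha.
have h0 := ub 0 (_ : 0 <= 0 <= 1); rewrite Dfun_at0 in h0.
case: (eqVneq (a 0%N) 0) => a0; last first.
  by apply: lt_le_trans (h0 _); [rewrite normr_gt0 | rewrite lexx ler01].
have hh : 0 <= (1 / 2 : R) <= 1 by apply/andP; split; lra.
have := term_le_D a (1 / 2) 0%N (leq0n n) hh.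
have := ub _ hh.
have : 0 < Bk 0 (1 / 2) * `|1 / 2 - a 0%N|.
  rewrite a0 subr0; apply: mulr_gt0; last by rewrite normr_gt0; lra.
  rewrite /Bk bin0 expr0 !mul1r; apply: exprn_gt0; lra.
move=> h1 h2 h3; exact: lt_le_trans h1 (le_trans h3 h2).
Qed.

Lemma not_kink (a : nat -> R) k p : in_cube n a -> (k <= n)%N -> 0 < p < 1 ->
  Dfun n a p = Dmax n a -> p != a k.
Proof.
move=> ha kn hp fp; apply/eqP => pk.
have hk : 0 < a k < 1 by rewrite -pk.
have [q hq fq] := kink a k kn hk.
have [ub _] := Dmax_spec ha.
have h := ub q hq; rewrite -fp pk in h; move: (lt_le_trans fq h); by rewrite ltxx.
Qed.

Lemma away (a : nat -> R) k : in_cube n a -> (k <= n)%N ->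
  exists eps, [/\ 0 < eps, eps <= 1 & forall p, 0 < p < 1 -> Dfun n a p = Dmax n a ->
      eps * (p * (1 - p)) <= `|p - a k|].
Proof.
move=> ha kn; have /andP[ak0 ak1] := ha k kn.
have pp1 (p : R) : 0 < p < 1 -> p * (1 - p) <= 1.
  move=> /andP[p0 p1]; have : p * (1 - p) <= p * 1 by apply: ler_wpM2l; lra.
  lra.
case: (eqVneq (a k) 0) => a0.
  exists 1; split => // p /andP[p0 p1] _; rewrite a0 subr0 mul1r gtr0_norm //.
  have : p * (1 - p) <= p * 1 by apply: ler_wpM2l; lra.
  lra.
case: (eqVneq (a k) 1) => a1.
  exists 1; split => // p /andP[p0 p1] _; rewrite a1 mul1r distrC gtr0_norm ?subr_gt0 //.
  have : p * (1 - p) <= 1 * (1 - p) by apply: ler_wpM2r; lra.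
  lra.
have hk : 0 < a k < 1 by rewrite !lt_def a0 ak0 eq_sym a1 ak1.
have [q hq fq] := kink a k kn hk.
have [ub _] := Dmax_spec ha.
have fm : Dfun n a (a k) < Dmax n a := lt_le_trans fq (ub q hq).
have [e e0 he] := near_lt (Dfun_cont a) fm.
exists (Num.min e 1); split.
- by rewrite lt_min e0 ltr01.
- by rewrite ge_min lexx orbT.
move=> p hp fp.
have : e <= `|a k - p|.
  rewrite leNgt; apply/negP => /he; rewrite fp ltxx //.
rewrite distrC => h.
have m1 : Num.min e 1 <= e by rewrite ge_min lexx.
have m0 : 0 < Num.min e 1 by rewrite lt_min e0 ltr01.
have := pp1 p hp => h2.
have : Num.min e 1 * (p * (1 - p)) <= Num.min e 1 * 1 by apply: ler_wpM2l => //; exact: ltW.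
lra.
Qed.

Lemma exists_d (a : nat -> R) p m : (forall k, (k < m)%N -> p != a k) ->
  exists2 d, 0 < d & forall k, (k < m)%N -> d <= `|p - a k|.
Proof.
elim: m => [|m IH] hk; first by exists 1 => // k.
have [d d0 hd] := IH (fun k hk' => hk k (ltnW hk')).
have pm : 0 < `|p - a m| by rewrite normr_gt0 subr_eq0 hk.
exists (Num.min d `|p - a m|); first by rewrite lt_min d0 pm.
move=> k; rewrite ltnS leq_eqVlt => /orP[/eqP ->|km].
  by rewrite ge_min lexx orbT.
by rewrite ge_min hd.
Qed.

Lemma cube_step (x t al be : R) : 0 <= x <= 1 -> 0 <= t * al <= 1 -> 0 <= t * be <= 1 ->
  0 <= x + t * (- (al * x) + be * (1 - x)) <= 1.
Proof.
move=> /andP[x0 x1] /andP[u0 u1] /andP[v0 v1].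
have e : x + t * (- (al * x) + be * (1 - x)) = x * (1 - t * al) + (t * be) * (1 - x) by ring.
rewrite e.
have h1 : 0 <= x * (1 - t * al) by apply: mulr_ge0; lra.
have h2 : 0 <= (t * be) * (1 - x) by apply: mulr_ge0; lra.
have h3 : (t * be) * (1 - x) <= 1 * (1 - x) by apply: ler_wpM2r; lra.
have h4 : x * (1 - t * al) <= x * 1 by apply: ler_wpM2l; lra.
apply/andP; split; lra.
Qed.

Lemma Q_bound (p ai aj eps : R) : 0 < p < 1 -> p != ai -> p != aj -> ~ (ai < p < aj) ->
  eps * (p * (1 - p)) <= `|p - ai| -> eps * (p * (1 - p)) <= `|p - aj| ->
  eps * (p * (1 - p)) <= - (Num.sg (p - ai) * ai * (1 - p)) + Num.sg (p - aj) * (1 - aj) * p.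
Proof.
move=> /andP[p0 p1] pi pj gap ei ej.
have pq : 0 <= p * (1 - p) by apply: mulr_ge0; lra.
suff : (1 - p) * `|p - ai| + p * `|p - aj| <=
    - (Num.sg (p - ai) * ai * (1 - p)) + Num.sg (p - aj) * (1 - aj) * p.
  have h1 : (1 - p) * (eps * (p * (1 - p))) <= (1 - p) * `|p - ai| by apply: ler_wpM2l => //; lra.
  have h2 : p * (eps * (p * (1 - p))) <= p * `|p - aj| by apply: ler_wpM2l => //; lra.
  have -> : eps * (p * (1 - p)) = (1 - p) * (eps * (p * (1 - p))) + p * (eps * (p * (1 - p))) by ring.
  lra.
case: (ltrgtP p ai) => hi; last by rewrite hi eqxx in pi.
- have si : p - ai < 0 by rewrite subr_lt0.
  rewrite (ltr0_sg si) ?(ltr0_norm si).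
  case: (ltrgtP p aj) => hj; last by rewrite hj eqxx in pj.
  + have sj : p - aj < 0 by rewrite subr_lt0.
    rewrite (ltr0_sg sj) ?(ltr0_norm sj).
    by rewrite -subr_ge0 [X in 0 <= X](_ : _ = 0); [rewrite lexx | ring].
  + have sj : 0 < p - aj by rewrite subr_gt0.
    rewrite (gtr0_sg sj) ?(gtr0_norm sj).
    have e : - (-1 * ai * (1 - p)) + 1 * (1 - aj) * p
       = (1 - p) * - (p - ai) + p * (p - aj) + 2 * (p * (1 - p)) by ring.
    rewrite e; lra.
- have si : 0 < p - ai by rewrite subr_gt0.
  rewrite (gtr0_sg si) ?(gtr0_norm si).
  case: (ltrgtP p aj) => hj; last by rewrite hj eqxx in pj.
  + by exfalso; apply: gap; rewrite hi hj.
  + have sj : 0 < p - aj by rewrite subr_gt0.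
    rewrite (gtr0_sg sj) ?(gtr0_norm sj).
    by rewrite -subr_ge0 [X in 0 <= X](_ : _ = 0); [rewrite lexx | ring].
Qed.

Lemma SH_bound (a : nat -> R) i p eps : (i < n)%N -> 0 < p < 1 ->
  p != a i -> p != a i.+1 -> ~ (a i < p < a i.+1) -> 0 <= eps ->
  eps * (p * (1 - p)) <= `|p - a i| -> eps * (p * (1 - p)) <= `|p - a i.+1| ->
  eps * (p ^+ i.+1 * (1 - p) ^+ (n - i)) <=
  Bk i p * (Num.sg (p - a i) * (- ((n - i)%:R * a i))) +
  Bk i.+1 p * (Num.sg (p - a i.+1) * ((i.+1)%:R * (1 - a i.+1))).
Proof.
move=> hi hp pi pj gap e0 ei ej.
have hQ := @Q_bound p (a i) (a i.+1) eps hp pi pj gap ei ej.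
case/andP: hp => p0 p1.
set X0 := p ^+ i * (1 - p) ^+ (n - i.+1).
have X00 : 0 <= X0 by apply: mulr_ge0; apply: exprn_ge0; lra.
have hN : ('C(n, i.+1))%:R * (i.+1)%:R = ('C(n, i))%:R * (n - i)%:R :> R.
  by rewrite -!natrM mulnC mul_bin_left mulnC.
have N1 : 1 <= ('C(n, i))%:R * (n - i)%:R :> R.
  rewrite -natrM ler1n muln_gt0 bin_gt0 subn_gt0 hi andbT; exact: ltnW.
set N := ('C(n, i))%:R * (n - i)%:R in hN N1.
set Q := - (Num.sg (p - a i) * a i * (1 - p)) + Num.sg (p - a i.+1) * (1 - a i.+1) * p in hQ.
have e1 : Bk i p * (Num.sg (p - a i) * (- ((n - i)%:R * a i))) +
  Bk i.+1 p * (Num.sg (p - a i.+1) * ((i.+1)%:R * (1 - a i.+1)))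
  = X0 * (('C(n, i))%:R * (n - i)%:R * (- (Num.sg (p - a i) * a i * (1 - p))) +
          ('C(n, i.+1))%:R * (i.+1)%:R * (Num.sg (p - a i.+1) * (1 - a i.+1) * p)).
  rewrite /X0 /Bk -(subnSK hi) !exprS; ring.
rewrite e1 hN -mulrDr -/Q.
have eX : p ^+ i.+1 * (1 - p) ^+ (n - i) = X0 * (p * (1 - p)).
  by rewrite /X0 -(subnSK hi) !exprS; ring.
rewrite eX.
have h1 : eps * (p * (1 - p)) <= N * Q.
  have Q0 : 0 <= Q by apply: le_trans hQ; apply: mulr_ge0 => //; apply: mulr_ge0; lra.
  have : Q <= N * Q by rewrite -[X in X <= _]mul1r; apply: ler_wpM2r.
  lra.
have : X0 * (eps * (p * (1 - p))) <= X0 * (N * Q) by apply: ler_wpM2l.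
by rewrite mulrCA.
Qed.

Lemma SE_bound (a : nat -> R) i p : in_cube n a -> (i < n)%N -> 0 < p < 1 ->
  p != a 0%N -> p != a n ->
  - (2 * (p ^+ i.+1 * (1 - p) ^+ (n - i))) <=
  Bk 0 p * (Num.sg (p - a 0%N) * (- a 0%N ^+ i.+1)) +
  Bk n p * (Num.sg (p - a n) * ((1 - a n) ^+ (n - i))).
Proof.
move=> ha hi /andP[p0 p1] p0a pna.
have /andP[a00 a01] := ha 0%N (leq0n n).
have /andP[an0 an1] := ha n (leqnn n).
set X := p ^+ i.+1 * (1 - p) ^+ (n - i).
have X0 : 0 <= X by apply: mulr_ge0; apply: exprn_ge0; lra.
have B0 : Bk 0 p = (1 - p) ^+ n by rewrite /Bk bin0 expr0 mul1r mul1r subn0.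
have Bn : Bk n p = p ^+ n by rewrite /Bk binn subnn expr0 mulr1 mul1r.
rewrite B0 Bn.
suff [h1 h2] : - X <= (1 - p) ^+ n * (Num.sg (p - a 0%N) * - a 0%N ^+ i.+1) /\
         - X <= p ^+ n * (Num.sg (p - a n) * (1 - a n) ^+ (n - i)) by lra.
split.
- case: (ltrgtP p (a 0%N)) => h; last by rewrite h eqxx in p0a.
  + rewrite ltr0_sg ?subr_lt0 // mulN1r opprK.
    have : 0 <= (1 - p) ^+ n * a 0%N ^+ i.+1 by apply: mulr_ge0; apply: exprn_ge0; lra.
    lra.
  + rewrite gtr0_sg ?subr_gt0 // mul1r mulrN lerN2.
    rewrite /X mulrC; apply: ler_pM.
    * exact: exprn_ge0.
    * apply: exprn_ge0; lra.
    * apply: lerXn2r; rewrite ?nnegrE //; try lra.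
    * apply: ler_wiXn2l; try lra; exact: leq_subr.
- case: (ltrgtP p (a n)) => h; last by rewrite h eqxx in pna.
  + rewrite ltr0_sg ?subr_lt0 // mulN1r mulrN lerN2.
    rewrite /X; apply: ler_pM.
    * apply: exprn_ge0; lra.
    * apply: exprn_ge0; lra.
    * apply: ler_wiXn2l; try lra; exact: hi.
    * apply: lerXn2r; rewrite ?nnegrE //; lra.
  + rewrite gtr0_sg ?subr_gt0 // mul1r.
    have : 0 <= p ^+ n * (1 - a n) ^+ (n - i) by apply: mulr_ge0; apply: exprn_ge0; lra.
    lra.
Qed.

Lemma main_gap (a : nat -> R) i : (1 <= n)%N -> in_cube n a ->
  (forall x : nat -> R, in_cube n x -> Dmax n a <= Dmax n x) -> (i < n)%N ->
  exists x : R, [/\ 0 <= x <= 1, Dfun n a x = Dmax n a & a i < x < a i.+1].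
Proof.
move=> n1 ha hmin hi.
case: (pselect (exists x : R, [/\ 0 <= x <= 1, Dfun n a x = Dmax n a & a i < x < a i.+1])) => // hno.
exfalso.
have gap p : 0 <= p <= 1 -> Dfun n a p = Dmax n a -> ~ (a i < p < a i.+1).
  by move=> hp fp hg; apply: hno; exists p; split.
have [e1 [e10 e11 he1]] := away a i ha (ltnW hi).
have [e2 [e20 e21 he2]] := away a i.+1 ha hi.
set eps := Num.min e1 e2.
have eps0 : 0 < eps by rewrite lt_min e10 e20.
have epsl1 : eps <= e1 by rewrite ge_min lexx.
have epsl2 : eps <= e2 by rewrite ge_min lexx orbT.
set del := eps / 4.
have del0 : 0 < del by rewrite divr_gt0.
have del1 : del <= 1 by rewrite /del ler_pdivrMr //; lra.
pose H k := (if k == i then - ((n - i)%:R * a k) else 0) + (if k == i.+1 then (i.+1)%:R * (1 - a k) else 0).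
pose E k := (if k == 0%N then - a k ^+ i.+1 else 0) + (if k == n then (1 - a k) ^+ (n - i) else 0).
pose h k := H k + del * E k.
pose al k := (if k == i then (n - i)%:R else 0) + (if k == 0%N then del * a k ^+ i else 0).
pose be k := (if k == i.+1 then (i.+1)%:R else 0) + (if k == n then del * (1 - a k) ^+ (n - i.+1) else 0).
have hrep k : h k = - (al k * a k) + be k * (1 - a k).
  rewrite /h /H /E /al /be -(subnSK hi) !exprS.
  by case: (k == i); case: (k == i.+1); case: (k == 0%N); case: (k == n); ring.
have nR : (n - i)%:R <= n%:R :> R by rewrite ler_nat leq_subr.
have iR : (i.+1)%:R <= n%:R :> R by rewrite ler_nat.
have al_b k : (k <= n)%N -> 0 <= al k <= n%:R + 1.
  move=> kn; have /andP[ak0 ak1] := ha k kn.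
  have p1 : 0 <= a k ^+ i <= 1 by rewrite exprn_ge0 // exprn_ile1.
  have : 0 <= del * a k ^+ i <= 1.
    apply/andP; split; first by apply: mulr_ge0; lra.
    have : del * a k ^+ i <= del * 1 by apply: ler_wpM2l; lra.
    lra.
  move=> /andP[d0 d1].
  rewrite /al; case: (k == i); case: (k == 0%N); rewrite ?addr0 ?add0r; try lra.
  all: try (have := ler0n R (n - i); lra).
have be_b k : (k <= n)%N -> 0 <= be k <= n%:R + 1.
  move=> kn; have /andP[ak0 ak1] := ha k kn.
  have p1 : 0 <= (1 - a k) ^+ (n - i.+1) <= 1 by rewrite exprn_ge0 ?exprn_ile1 //; lra.
  have : 0 <= del * (1 - a k) ^+ (n - i.+1) <= 1.
    apply/andP; split; first by apply: mulr_ge0; lra.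
    have : del * (1 - a k) ^+ (n - i.+1) <= del * 1 by apply: ler_wpM2l; lra.
    lra.
  move=> /andP[d0 d1].
  rewrite /be; case: (k == i.+1); case: (k == n); rewrite ?addr0 ?add0r; try lra.
  all: try (have := ler0n R i.+1; lra).
have nR0 : 0 <= n%:R :> R by exact: ler0n.
set tau := (n%:R + 1 : R)^-1.
have tau0 : 0 < tau by rewrite invr_gt0; lra.
have tau_al x : 0 <= x <= n%:R + 1 -> 0 <= tau * x <= 1.
  move=> /andP[x0 x1]; apply/andP; split; first by apply: mulr_ge0; lra.
  by rewrite /tau ler_pdivrMl ?mulr1 //; lra.
have t_al t x : 0 <= t <= tau -> 0 <= x <= n%:R + 1 -> 0 <= t * x <= 1.
  move=> /andP[t0 t1] hx; have /andP[u0 u1] := tau_al x hx; case/andP: hx => x0 x1.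
  apply/andP; split; first exact: mulr_ge0.
  by apply: le_trans u1; apply: ler_wpM2r.
set Hh := 2 * (n%:R + 1) : R.
have hH k : (k <= n)%N -> `|h k| <= Hh.
  move=> kn; rewrite hrep; have /andP[ak0 ak1] := ha k kn.
  have /andP[a0 a1] := al_b k kn; have /andP[b0 b1] := be_b k kn.
  apply: (le_trans (ler_normD _ _)); rewrite normrN !normrM !ger0_norm //; try lra.
  have : al k * a k <= al k * 1 by apply: ler_wpM2l.
  have : be k * (1 - a k) <= be k * 1 by apply: ler_wpM2l; lra.
  rewrite /Hh; lra.
have hcube t : 0 <= t <= tau -> in_cube n (fun k => a k + t * h k).
  move=> ht k kn; rewrite hrep; apply: cube_step; first exact: ha.
  - exact: t_al (al_b k kn).
  - exact: t_al (be_b k kn).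
have mp := mpos a ha.
have [ub _] := Dmax_spec ha.
apply: (GL a h tau Hh tau0 hH hcube ha hmin) => p hp fp.
case: (eqVneq p 0) => [p0|pn0].
  move: fp; rewrite p0 Dfun_at0 => fp.
  have a0pos : 0 < a 0%N.
    have /andP[h0 _] := ha 0%N (leq0n n).
    rewrite lt_def h0 andbT; apply/eqP => e; rewrite e normr0 in fp.
    by rewrite -fp ltxx in mp.
  exists tau; first by rewrite tau0 lexx.
  rewrite Dfun_at0 hrep.
  have be0 : be 0%N = 0.
    rewrite /be; have -> : (0 == i.+1)%N = false by [].
    have -> : (0 == n)%N = false by apply/negbTE; rewrite eq_sym -lt0n.
    by rewrite addr0.
  have al0 : 0 < al 0%N.
    rewrite /al eqxx; apply: (@lt_le_trans _ _ (del * a 0%N ^+ i)).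
      by apply: mulr_gt0 => //; exact: exprn_gt0.
    by rewrite lerDr; case: (_ == _) => //; exact: ler0n.
  have /andP[u0 u1] := tau_al _ (al_b 0%N (leq0n n)).
  have ta0 : 0 < tau * al 0%N by apply: mulr_gt0.
  rewrite be0 mul0r addr0 -fp (gtr0_norm a0pos).
  have e : a 0%N + tau * (- (al 0%N * a 0%N)) = a 0%N * (1 - tau * al 0%N) by ring.
  rewrite e.
  have h1 : 0 <= a 0%N * (1 - tau * al 0%N) by apply: mulr_ge0; lra.
  rewrite (ger0_norm h1).
  have : a 0%N * (1 - tau * al 0%N) < a 0%N * 1 by rewrite ltr_pM2l //; lra.
  lra.
case: (eqVneq p 1) => [p1|pn1].
  move: fp; rewrite p1 Dfun_at1 => fp.
  have an1 : a n < 1.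
    have /andP[_ h0] := ha n (leqnn n).
    rewrite lt_def h0 andbT eq_sym; apply/eqP => e; rewrite e subrr normr0 in fp.
    by rewrite -fp ltxx in mp.
  exists tau; first by rewrite tau0 lexx.
  rewrite Dfun_at1 hrep.
  have al0 : al n = 0.
    rewrite /al (gtn_eqF hi).
    have -> : (n == 0)%N = false by apply/negbTE; rewrite -lt0n.
    by rewrite addr0.
  have be0 : 0 < be n.
    rewrite /be eqxx; apply: (@lt_le_trans _ _ (del * (1 - a n) ^+ (n - i.+1))).
      by apply: mulr_gt0 => //; apply: exprn_gt0; lra.
    by rewrite lerDr; case: (_ == _) => //; exact: ler0n.
  have /andP[u0 u1] := tau_al _ (be_b n (leqnn n)).
  have ta0 : 0 < tau * be n by apply: mulr_gt0.
  have pos : 0 < 1 - a n by lra.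
  rewrite al0 mul0r oppr0 add0r -fp (gtr0_norm pos).
  have e : 1 - (a n + tau * (be n * (1 - a n))) = (1 - a n) * (1 - tau * be n) by ring.
  rewrite e.
  have h1 : 0 <= (1 - a n) * (1 - tau * be n) by apply: mulr_ge0; lra.
  rewrite (ger0_norm h1).
  have : (1 - a n) * (1 - tau * be n) < (1 - a n) * 1 by rewrite ltr_pM2l //; lra.
  lra.
have hp' : 0 < p < 1.
  case/andP: hp => hp0 hp1; rewrite !lt_def hp0 hp1 pn0 eq_sym pn1 //.
have nk k : (k <= n)%N -> p != a k by move=> kn; exact: not_kink a k p ha kn hp' fp.
have [d d0 hd] := exists_d a p n.+1 (fun k hk => nk k hk).
have Hh0 : 0 < Hh by rewrite /Hh; lra.
set t0 := Num.min tau (d / Hh).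
have t00 : 0 < t0 by rewrite lt_min tau0 divr_gt0.
have t0tau : t0 <= tau by rewrite ge_min lexx.
have t0d : t0 <= d / Hh by rewrite ge_min lexx orbT.
exists t0; first by rewrite t00 t0tau.
have hterm k : (k < n.+1)%N -> Bk k p * `|p - (a k + t0 * h k)| =
    Bk k p * `|p - a k| - t0 * (Bk k p * (Num.sg (p - a k) * h k)).
  move=> kn.
  rewrite (_ : p - (a k + t0 * h k) = (p - a k) - t0 * h k); last by ring.
  rewrite abs_step; first by ring.
  - by rewrite subr_eq0 nk.
  - exact: ltW.
  - have := hH k kn; have := hd k kn => h1 h2.
    have : t0 * `|h k| <= (d / Hh) * Hh.
      apply: ler_pM => //; exact: ltW.
    rewrite mulrVK ?unitfE ?gt_eqF //; lra.
set S := \sum_(k < n.+1) Bk k p * (Num.sg (p - a k) * h k).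
have eD : Dfun n (fun k => a k + t0 * h k) p = Dfun n a p - t0 * S.
  rewrite !Dfun_B /S mulr_sumr -sumrB; apply: eq_bigr => k _; exact: hterm k (ltn_ord k).
rewrite eD -fp.
suff S0 : 0 < S by have := mulr_gt0 t00 S0; lra.
have eS : S = \sum_(k < n.+1) Bk k p * (Num.sg (p - a k) * H k) +
              del * \sum_(k < n.+1) Bk k p * (Num.sg (p - a k) * E k).
  by rewrite /S mulr_sumr -big_split; apply: eq_bigr => k _; rewrite /h /=; ring.
have eH : \sum_(k < n.+1) Bk k p * (Num.sg (p - a k) * H k) =
   Bk i p * (Num.sg (p - a i) * (- ((n - i)%:R * a i))) +
   Bk i.+1 p * (Num.sg (p - a i.+1) * ((i.+1)%:R * (1 - a i.+1))).
  rewrite (eq_bigr (fun k : 'I_n.+1 =>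
     (if (k : nat) == i then Bk k p * (Num.sg (p - a k) * (- ((n - i)%:R * a k))) else 0) +
     (if (k : nat) == i.+1 then Bk k p * (Num.sg (p - a k) * ((i.+1)%:R * (1 - a k))) else 0))).
    rewrite big_split /=.
    rewrite (sum_if (fun k => Bk k p * (Num.sg (p - a k) * (- ((n - i)%:R * a k))))) ?ltnS ?(ltnW hi) //.
    by rewrite (sum_if (fun k => Bk k p * (Num.sg (p - a k) * ((i.+1)%:R * (1 - a k))))).
  move=> k _; rewrite /H; case: ifP => hk1; case: ifP => hk2; rewrite ?addr0 ?add0r ?mulr0 //.
  by move: hk2; rewrite (eqP hk1) ltn_eqF.
have eE : \sum_(k < n.+1) Bk k p * (Num.sg (p - a k) * E k) =
   Bk 0 p * (Num.sg (p - a 0%N) * (- a 0%N ^+ i.+1)) +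
   Bk n p * (Num.sg (p - a n) * ((1 - a n) ^+ (n - i))).
  rewrite (eq_bigr (fun k : 'I_n.+1 =>
     (if (k : nat) == 0%N then Bk k p * (Num.sg (p - a k) * (- a k ^+ i.+1)) else 0) +
     (if (k : nat) == n then Bk k p * (Num.sg (p - a k) * ((1 - a k) ^+ (n - i))) else 0))).
    rewrite big_split /=.
    rewrite (sum_if (fun k => Bk k p * (Num.sg (p - a k) * (- a k ^+ i.+1)))) //.
    by rewrite (sum_if (fun k => Bk k p * (Num.sg (p - a k) * ((1 - a k) ^+ (n - i))))).
  move=> k _; rewrite /E; case: ifP => hk1; case: ifP => hk2; rewrite ?addr0 ?add0r ?mulr0 //.
  by move: hk2; rewrite (eqP hk1) eq_sym (gtn_eqF n1).
have ei : eps * (p * (1 - p)) <= `|p - a i|.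
  apply: le_trans (he1 p hp' fp); apply: ler_wpM2r => //.
  by case/andP: hp' => q0 q1; apply: mulr_ge0; lra.
have ej : eps * (p * (1 - p)) <= `|p - a i.+1|.
  apply: le_trans (he2 p hp' fp); apply: ler_wpM2r => //.
  by case/andP: hp' => q0 q1; apply: mulr_ge0; lra.
have hSH := SH_bound a i p eps hi hp' (nk i (ltnW hi)) (nk i.+1 hi) (gap p hp fp) (ltW eps0) ei ej.
have hSE := SE_bound a i p ha hi hp' (nk 0%N (leq0n n)) (nk n (leqnn n)).
have X0 : 0 < p ^+ i.+1 * (1 - p) ^+ (n - i).
  by case/andP: hp' => q0 q1; apply: mulr_gt0; apply: exprn_gt0; lra.
rewrite eS eH eE.
set X := p ^+ i.+1 * (1 - p) ^+ (n - i) in X0 hSH hSE *.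
have : del * (- (2 * X)) <= del * (Bk 0 p * (Num.sg (p - a 0%N) * (- a 0%N ^+ i.+1)) +
   Bk n p * (Num.sg (p - a n) * ((1 - a n) ^+ (n - i)))) by apply: ler_wpM2l => //; exact: ltW.
have : 0 < eps * X by apply: mulr_gt0.
rewrite /del; lra.
Qed.



End S.

Local Close Scope classical_set_scope.

Theorem theorem2p2 (R : realType) (n : nat) (a : nat -> R) :
  (1 <= n)%N ->
  in_cube n a ->
  (forall x : nat -> R, in_cube n x -> Dmax n a <= Dmax n x) ->
  (forall i, (i < n)%N -> a i < a i.+1) /\
  (forall i, (i < n)%N ->
     exists x : R, [/\ 0 <= x <= 1, Dfun n a x = Dmax n a & a i < x < a i.+1]).
Proof.
move=> n1 ha hmin.
have H2 : forall i, (i < n)%N ->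
    exists x : R, [/\ 0 <= x <= 1, Dfun n a x = Dmax n a & a i < x < a i.+1].
  by move=> i hi; exact: main_gap n1 ha hmin hi.
split => // i hi; have [x [_ _ /andP[h1 h2]]] := H2 i hi; exact: lt_trans h1 h2.
Qed.
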